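(* Let $M$ be a pseudofinite $\mathcal{L}$-structure (an infinite ultraproduct of finite $\mathcal{L}$-structures) and $X\subseteq M^n$ an internal set. Suppose there is $r\in\mathbb{N}$ such that for every $\mathcal{L}$-formula $\varphi(x,y)$ over $\emptyset$ with $|x|=1$ and every $b\in M^{|y|}$, $\pmb{\delta}_X(\varphi(x,b))\in\{0,1,\dots,r\}$, and for each $i\le r$ the set $\{b\in M^{|y|}:\pmb{\delta}_X(\varphi(x,b))=i\}$ is $\emptyset$-definable. Then for every formula $\psi(x,y)$ and every $c\in M^{|y|}$, $\pmb{\delta}_X(\psi(x,c))\in\{0,\dots,|x|\cdot r\}$. Moreover, $\pmb{\delta}_X$ is definable.
   Context: For internal $D=\prod D_i/\mathcal{U}$, $|D|=(|D_i|)/\mathcal{U}\in\mathbb{R}^*$; for definable $A$, $\pmb{\delta}_X(A)=\mathrm{st}(\log|A|/\log|X|)$. $\pmb{\delta}_X$ is continuous if for every parameter-free formula $\phi(x,y)$ and reals $r_1<r_2$ there is a $\emptyset$-definable $D$ with $\{a:\pmb{\delta}_X(\phi(x,a))\le r_1\}\subseteq D\subseteq\{a:\pmb{\delta}_X(\phi(x,a))<r_2\}$; it is definable if it is continuous and for every parameter-free $\phi(x,y)$ the set $\{\pmb{\delta}_X(\phi(x,a)):a\in M^{|y|}\}$ is finite. *)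

(* Defs.v *)
From Stdlib Require Import Reals.
From Coquelicot Require Import Rbar.
From mathcomp Require Import all_boot.
From mathcomp Require Import boolp.
Open Scope nat_scope.

Set Implicit Arguments.
Unset Strict Implicit.
Unset Printing Implicit Defensive.

Record language := Language {
  Fsym : Type; fun_ar : Fsym -> nat;
  Rsym : Type; rel_ar : Rsym -> nat }.

Inductive term (L : language) : Type :=
  | tvar : nat -> term L
  | tapp : forall f : Fsym L, ('I_(fun_ar f) -> term L) -> term L.

(* Formulas (with equality); variables are named by natural numbers.
   Other connectives/quantifiers are definable from these. There are no
   parameter constants: every formula is over the empty set. *)
Inductive formula (L : language) : Type :=
  | fEq  : term L -> term L -> formula L
  | fRel : forall r : Rsym L, ('I_(rel_ar r) -> term L) -> formula L
  | fNot : formula L -> formula L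
  | fAnd : formula L -> formula L -> formula L
  | fEx  : nat -> formula L -> formula L.

Fixpoint tfree (L : language) (j : nat) (t : term L) : Prop :=
  match t with
  | tvar k => j = k
  | tapp f args => exists i, tfree j (args i)
  end.

Fixpoint free (L : language) (j : nat) (phi : formula L) : Prop :=
  match phi with
  | fEq t1 t2 => tfree j t1 \/ tfree j t2
  | fRel r args => exists i, tfree j (args i)
  | fNot p => free j p
  | fAnd p q => free j p \/ free j q
  | fEx x p => j <> x /\ free j p
  end.

Definition fv_lt (L : language) (k : nat) (phi : formula L) : Prop :=
  forall j, free j phi -> (j < k)%N.

(* A structure is given with the relation interpreting the equality   *)
(* symbol (actual equality for genuine structures; the ultrafilter    *)
(* congruence for the ultraproduct, presented as a setoid).           *)

Record structure (L : language) := Structure {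
  scar : Type;
  seqr : scar -> scar -> Prop;
  sfun : forall f : Fsym L, ('I_(fun_ar f) -> scar) -> scar;
  srel : forall r : Rsym L, ('I_(rel_ar r) -> scar) -> Prop }.

Fixpoint teval (L : language) (S : structure L) (v : nat -> scar S)
  (t : term L) : scar S :=
  match t with
  | tvar k => v k
  | tapp f args => @sfun L S f (fun j => teval v (args j))
  end.

Fixpoint sat (L : language) (S : structure L) (v : nat -> scar S)
  (phi : formula L) : Prop :=
  match phi with
  | fEq t1 t2 => @seqr L S (teval v t1) (teval v t2)
  | fRel r args => @srel L S r (fun j => teval v (args j))
  | fNot p => ~ sat v p
  | fAnd p q => sat v p /\ sat v q
  | fEx x p => exists a : scar S, sat (fun k => if k == x then a else v k) p
  end.

(* valuation from an n-tuple a (variables 0..n-1) followed by an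
   m-tuple b (variables n..n+m-1); w is an irrelevant default. *)
Definition ext (T : Type) (w : T) (n : nat) (a : 'I_n -> T) (k : nat) : T :=
  match (insub k : option 'I_n) with Some j => a j | None => w end.

Definition tval (T : Type) (w : T) (n m : nat) (a : 'I_n -> T)
  (b : 'I_m -> T) : nat -> T :=
  fun k => if (k < n)%N then ext w a k else ext w b (k - n).

(* Finite L-structures (nonempty, as usual: fs_wit is a witness). *)
Record finStructure (L : language) := FinStructure {
  fs_car : finType;
  fs_wit : fs_car;
  fs_fun : forall f : Fsym L, ('I_(fun_ar f) -> fs_car) -> fs_car;
  fs_rel : forall r : Rsym L, ('I_(rel_ar r) -> fs_car) -> Prop }.

Definition fin_struct (L : language) (A : finStructure L) : structure L :=
  {| scar := fs_car A; seqr := fun x y => x = y;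
     sfun := @fs_fun L A; srel := @fs_rel L A |}.

Record ultrafilter (I : Type) := Ultrafilter {
  uf : (I -> Prop) -> Prop;
  uf_T : uf (fun _ => True);
  uf_0 : ~ uf (fun _ => False);
  uf_up : forall A B : I -> Prop, (forall i, A i -> B i) -> uf A -> uf B;
  uf_cap : forall A B : I -> Prop, uf A -> uf B -> uf (fun i => A i /\ B i);
  uf_ultra : forall A : I -> Prop, uf A \/ uf (fun i => ~ A i) }.

Unset Implicit Arguments.

Section Ultraproduct.
Variables (L : language) (I : Type) (U : ultrafilter I)
          (M : I -> finStructure L).

Definition ultraprod : structure L :=
  {| scar := forall i, fs_car (M i);
     seqr := fun a b => uf U (fun i => a i = b i);
     sfun := fun f args i => @fs_fun L (M i) f (fun j => args j i);
     srel := fun r args => uf U (fun i => @fs_rel L (M i) r (fun j => args j i)) |}.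

Definition ultraprod_wit : scar ultraprod := fun i => fs_wit (M i).

Definition definable0 (m : nat) (D : ('I_m -> scar ultraprod) -> Prop) : Prop :=
  exists theta : formula L, fv_lt m theta /\
    forall b : 'I_m -> scar ultraprod, D b <-> @sat L ultraprod (ext ultraprod_wit b) theta.

(* ultralimit of a sequence in the extended reals along U; for a sequence
   of reals this is the standard part of its class in R^* *)
Definition ulim (s : I -> Rbar) (t : Rbar) : Prop :=
  match t with
  | Rbar.Finite r => forall eps : R, Rlt 0 eps ->
      uf U (fun i => exists x : R, s i = Rbar.Finite x /\ Rlt (Rabs (Rminus x r)) eps)
  | p_infty => forall K : R, uf U (fun i => Rbar_lt (Rbar.Finite K) (s i))
  | m_infty => forall K : R, uf U (fun i => Rbar_lt (s i) (Rbar.Finite K))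
  end.

Variables (d : nat) (X : forall i, {set {ffun 'I_d -> fs_car (M i)}}).

Definition fiber_card (n m : nat) (psi : formula L) (c : 'I_m -> scar ultraprod)
  (i : I) : nat :=
  #|[set a : {ffun 'I_n -> fs_car (M i)} |
      `[< @sat L (fin_struct (M i)) (tval (fs_wit (M i)) (fun j => a j)
                                        (fun j => c j i)) psi >] ]|.

Definition delta_ratio (n m : nat) (psi : formula L) (c : 'I_m -> scar ultraprod)
  (i : I) : Rbar :=
  if fiber_card n m psi c i == 0%N then m_infty
  else Rbar.Finite (Rdiv (ln (INR (fiber_card n m psi c i))) (ln (INR #|X i|))).

Definition delta_is (n m : nat) (psi : formula L) (c : 'I_m -> scar ultraprod)
  (t : Rbar) : Prop := ulim (delta_ratio n m psi c) t.

Definition delta_continuous : Prop :=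
  forall (n m : nat) (psi : formula L), fv_lt (n + m) psi ->
  forall r1 r2 : R, Rlt r1 r2 ->
  exists D : ('I_m -> scar ultraprod) -> Prop, definable0 m D /\
    (forall a, (exists t, delta_is n m psi a t /\ Rbar_le t (Rbar.Finite r1)) -> D a) /\
    (forall a, D a -> exists t, delta_is n m psi a t /\ Rbar_lt t (Rbar.Finite r2)).

Definition delta_definable : Prop :=
  delta_continuous /\
  forall (n m : nat) (psi : formula L), fv_lt (n + m) psi ->
  exists vals : list Rbar,
    forall (a : 'I_m -> scar ultraprod) (t : Rbar), delta_is n m psi a t -> List.In t vals.

End Ultraproduct.

Arguments ultraprod {L I} U M.
Arguments ultraprod_wit {L I} U M _.
Arguments definable0 {L I} U M m D.
Arguments ulim {I} U s t.
Arguments fiber_card {L I} U M n m psi c i.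
Arguments delta_ratio {L I} U M {d} X n m psi c i.
Arguments delta_is {L I} U M {d} X n m psi c t.
Arguments delta_continuous {L I} U M {d} X.
Arguments delta_definable {L I} U M {d} X.

(* Main.v *)
Require Import Defs.
From Stdlib Require Import Reals Lra.
From Coquelicot Require Import Rbar.
From mathcomp Require Import all_boot.
From mathcomp Require Import boolp.
Local Open Scope nat_scope.
Set Implicit Arguments.
Unset Strict Implicit.

Section Los.
Variables (L : language) (I : Type) (U : ultrafilter I) (M : I -> finStructure L).
Local Notation UP := (ultraprod U M).
Local Notation FS i := (fin_struct (M i)).

Lemma uf_notE (A : I -> Prop) : ~ uf U A <-> uf U (fun i => ~ A i).
Proof.
split.
- move=> nA; case: (uf_ultra U A) => // .
- move=> hn hA; apply: (@uf_0 _ U); apply: uf_up (uf_cap hA hn) => i [] //.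
Qed.

Lemma uf_andE (A B : I -> Prop) : uf U A /\ uf U B <-> uf U (fun i => A i /\ B i).
Proof.
split; first by case=> ??; apply: uf_cap.
by move=> h; split; apply: uf_up h => i [].
Qed.

Lemma uf_big (K : nat) (A : nat -> I -> Prop) :
  (forall k, k < K -> uf U (A k)) -> uf U (fun i => forall k, k < K -> A k i).
Proof.
elim: K => [|K IH] h.
  by apply: uf_up (uf_T U) => i _ k.
apply: uf_up (uf_cap (IH (fun k hk => h k (ltnW hk))) (h K (ltnSn K))).
move=> i [h1 h2] k; rewrite ltnS leq_eqVlt => /orP [/eqP -> //|]; exact: h1.
Qed.

Lemma sat_ext (S : structure L) (v w : nat -> scar S) phi :
  v =1 w -> sat v phi <-> sat w phi.
Proof. by move=> /funext ->. Qed.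

Lemma sat_imp (S : structure L) (v w : nat -> scar S) phi :
  v =1 w -> sat v phi -> sat w phi.
Proof. by move=> /funext ->. Qed.

Lemma teval_up (v : nat -> scar UP) (t : term L) (i : I) :
  teval v t i = teval (S := FS i) (fun k => v k i) t.
Proof.
elim: t => [k|f args IH] //=.
f_equal; apply: funext => j; exact: IH.
Qed.

Lemma los (phi : formula L) : forall (v : nat -> scar UP),
  sat v phi <-> uf U (fun i => sat (S := FS i) (fun k => v k i) phi).
Proof.
elim: phi => [t1 t2|rr args|p IH|p IHp q IHq|x p IH] v /=.
- split=> h; apply: uf_up h => i; by rewrite !teval_up.
- split=> h; apply: uf_up h => i;
    (have -> : (fun j => teval (S := UP) v (args j) i) = (fun j => teval (S := FS i) (fun k => v k i) (args j)) by apply: funext => j; exact: teval_up) => //.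
- rewrite IH; exact: uf_notE.
- rewrite IHp IHq; exact: uf_andE.
- split.
  + move=> [a ha]; move/IH: ha; apply: uf_up => i hi.
    exists (a i); move: hi; apply: sat_imp => k /=.
    by case: (k == x).
  + move=> h.
    have [a ha] : exists a : scar UP, forall i, (exists b : fs_car (M i),
        sat (S := FS i) (fun k => if k == x then b else v k i) p) ->
        sat (S := FS i) (fun k => if k == x then a i else v k i) p.
      have H : forall i, exists c : fs_car (M i), (exists b : fs_car (M i),
        sat (S := FS i) (fun k => if k == x then b else v k i) p) ->
        sat (S := FS i) (fun k => if k == x then c else v k i) p.
        move=> i; case: (pselect (exists b : fs_car (M i),
          sat (S := FS i) (fun k => if k == x then b else v k i) p)) => [[b hb]|hn].
          by exists b.
        by exists (fs_wit (M i)).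
      exists (fun i => proj1_sig (cid (H i))) => i; exact: (proj2_sig (cid (H i))).
    exists a; apply/IH; apply: uf_up h => i hi.
    move: (ha i hi); apply: sat_imp => k /=.
    by case: (k == x).
Qed.

Lemma def_iff m (D D' : ('I_m -> scar UP) -> Prop) :
  definable0 U M m D -> (forall b, D b <-> D' b) -> definable0 U M m D'.
Proof.
move=> [th [fv h]] e; exists th; split=> // b; rewrite -e; exact: h.
Qed.

Lemma def_not m (D : ('I_m -> scar UP) -> Prop) :
  definable0 U M m D -> definable0 U M m (fun b => ~ D b).
Proof.
move=> [th [fv h]]; exists (fNot th); split=> // b /=; rewrite h //.
Qed.

Lemma def_and m (D E : ('I_m -> scar UP) -> Prop) :
  definable0 U M m D -> definable0 U M m E -> definable0 U M m (fun b => D b /\ E b).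
Proof.
move=> [th [fv h]] [th' [fv' h']]; exists (fAnd th th'); split.
  by move=> j /= [] ?; [apply: fv|apply: fv'].
by move=> b /=; rewrite h h'.
Qed.

Definition fTrue : formula L := fEx 0 (fEq (tvar L 0) (tvar L 0)).

Lemma def_true m : definable0 U M m (fun _ => True).
Proof.
exists fTrue; split.
  by move=> j /= [hj [] e]; case: hj.
move=> b /=; split=> // _; exists (ultraprod_wit U M); by apply: uf_up (uf_T U).
Qed.

Lemma def_false m : definable0 U M m (fun _ => False).
Proof.
apply: def_iff (def_not (def_true m)) _ => b; tauto.
Qed.

Lemma def_or m (D E : ('I_m -> scar UP) -> Prop) :
  definable0 U M m D -> definable0 U M m E -> definable0 U M m (fun b => D b \/ E b).
Proof.
move=> hD hE; apply: def_iff (def_not (def_and (def_not hD) (def_not hE))) _.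
move=> b; split; first by move=> h; case: (pselect (D b)); [left|case: (pselect (E b)); [right|tauto]].
tauto.
Qed.

Lemma def_const m (Q : Prop) (D : ('I_m -> scar UP) -> Prop) :
  definable0 U M m D -> definable0 U M m (fun b => Q /\ D b).
Proof.
move=> hD; case: (pselect Q) => hQ.
  by apply: def_iff hD _ => b; tauto.
by apply: def_iff (def_false m) _ => b; tauto.
Qed.

Lemma def_exists m (K : nat) (P : nat -> ('I_m -> scar UP) -> Prop) :
  (forall k, k < K -> definable0 U M m (P k)) ->
  definable0 U M m (fun b => exists k, k < K /\ P k b).
Proof.
elim: K => [|K IH] h.
  by apply: def_iff (def_false m) _ => b; split=> // [[k []]].
apply: def_iff (def_or (IH (fun k hk => h k (ltnW hk))) (h K (ltnSn K))) _.
move=> b; split.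
  by case=> [[k [hk e]]|e]; [exists k; split=> //; apply: ltnW|exists K].
move=> [k [hk e]]; move: hk; rewrite ltnS leq_eqVlt => /orP [/eqP ek|hk].
  by right; rewrite -ek.
by left; exists k.
Qed.

Lemma def_forall m (K : nat) (P : nat -> ('I_m -> scar UP) -> Prop) :
  (forall k, k < K -> definable0 U M m (P k)) ->
  definable0 U M m (fun b => forall k, k < K -> P k b).
Proof.
move=> h; apply: def_iff (def_not (def_exists (P := fun k b => ~ P k b) (fun k hk => def_not (h k hk)))) _.
move=> b; split.
  move=> hn k hk; case: (pselect (P k b)) => // hP; case: hn; by exists k.
by move=> hall [k [hk hn]]; apply: hn; apply: hall.
Qed.

End Los.
Section Lim.
Local Open Scope R_scope.
Variables (I : Type) (U : ultrafilter I).

Lemma uf_ex (A : I -> Prop) : uf U A -> exists i, A i.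
Proof.
move=> h; case: (pselect (exists i, A i)) => // hn.
case: (@uf_0 _ U); apply: uf_up h => i hi; apply: hn; by exists i.
Qed.

Lemma ulim_fin_pinf s r : ulim U s (Rbar.Finite r) -> ulim U s p_infty -> False.
Proof.
move=> h1 h2; have [i [[x [e hx]] hk]] := uf_ex (uf_cap (h1 1 Rlt_0_1) (h2 (r + 1))).
rewrite e /= in hk; move: hx hk; split_Rabs; lra.
Qed.

Lemma ulim_fin_minf s r : ulim U s (Rbar.Finite r) -> ulim U s m_infty -> False.
Proof.
move=> h1 h2; have [i [[x [e hx]] hk]] := uf_ex (uf_cap (h1 1 Rlt_0_1) (h2 (r - 1))).
rewrite e /= in hk; move: hx hk; split_Rabs; lra.
Qed.

Lemma ulim_pinf_minf s : ulim U s p_infty -> ulim U s m_infty -> False.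
Proof.
move=> h1 h2; have [i [hk hk']] := uf_ex (uf_cap (h1 0) (h2 0)).
move: hk hk'; case: (s i) => //= x; lra.
Qed.

Lemma ulim_unique s t t' : ulim U s t -> ulim U s t' -> t = t'.
Proof.
case: t => [r||]; case: t' => [r'||] // h1 h2;
  try (by case: (ulim_fin_pinf h1 h2)); try (by case: (ulim_fin_pinf h2 h1));
  try (by case: (ulim_fin_minf h1 h2)); try (by case: (ulim_fin_minf h2 h1));
  try (by case: (ulim_pinf_minf h1 h2)); try (by case: (ulim_pinf_minf h2 h1)).
case: (Req_dec r r') => [->//|ne].
have he : (0 < Rabs (r - r') / 2) by apply: Rdiv_lt_0_compat; [apply: Rabs_pos_lt; lra|lra].
have [i [[x [e hx]] [y [e' hy]]]] := uf_ex (uf_cap (h1 _ he) (h2 _ he)).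
rewrite e in e'; case: e' => <- in hy; move: hx hy; split_Rabs; lra.
Qed.

End Lim.

Local Open Scope R_scope.
Lemma div_bounds (a Lg x eps : R) : (0 < Lg) ->
  (Rabs (a / Lg - x) < eps) <-> ((x - eps) * Lg < a /\ a < (x + eps) * Lg).
Proof.
move=> hL; have e : a = (a / Lg * Lg) by field; lra.
split.
- move=> h; rewrite e; move: h; set q := (a / Lg); split_Rabs; split; nra.
- move=> [h1 h2]; rewrite e in h1 h2; move: h1 h2; set q := (a / Lg) => h1 h2.
  split_Rabs; nra.
Qed.
Local Open Scope R_scope.
Lemma lnN_ge0 n : (0 < n)%N -> (0 <= ln (INR n)).
Proof.
move=> h; rewrite -ln_1; have h1 : (1 <= INR n) by apply: (le_INR 1%N); apply/leP.
case: (Rle_lt_or_eq_dec _ _ h1) => [h2|<-]; last by apply: Rle_refl.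
by apply: Rlt_le; apply: ln_increasing => //; lra.
Qed.

Lemma lnN_gt0 n : (1 < n)%N -> (0 < ln (INR n)).
Proof.
move=> h; rewrite -ln_1; apply: ln_increasing; first lra.
by apply: (lt_INR 1%N); apply/ltP.
Qed.

Lemma lnN_le a b : (0 < a)%N -> (a <= b)%N -> (ln (INR a) <= ln (INR b)).
Proof.
move=> ha hab; have h0 : (0 < INR a) by apply: (lt_INR 0%N); apply/ltP.
have h1 : (INR a <= INR b) by apply: le_INR; apply/leP.
case: (Rle_lt_or_eq_dec _ _ h1) => [h2|<-]; last by apply: Rle_refl.
by apply: Rlt_le; apply: ln_increasing.
Qed.

Lemma lnN_mul a b : (0 < a)%N -> (0 < b)%N -> ln (INR (a * b)%N) = (ln (INR a) + ln (INR b)).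
Proof.
move=> ha hb; rewrite mult_INR ln_mult //.
  by apply: (lt_INR 0%N); apply/ltP.
by apply: (lt_INR 0%N); apply/ltP.
Qed.

Section Delta.
Variables (L : language) (I : Type) (U : ultrafilter I) (M : I -> finStructure L).
Variables (d : nat) (X : forall i, {set {ffun 'I_d -> fs_car (M i)}}).
Hypothesis XL : uf U (fun i => (1 < #|X i|)%N).
Local Notation lnX i := (ln (INR #|X i|)).

Lemma di_minf n m psi c : delta_is U M X n m psi c m_infty <->
  uf U (fun i => fiber_card U M n m psi c i = 0%N).
Proof.
rewrite /delta_is /ulim /delta_ratio; split.
- move=> /(_ 0) h; apply: uf_up (uf_cap h XL) => i [].
  case: eqP => [//|hn] /= hl hx.
  have := lnN_gt0 hx; have : (0 <= ln (INR (fiber_card U M n m psi c i))).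
    by apply: lnN_ge0; rewrite lt0n; apply/eqP.
  move=> h1 h2; have : (0 <= ln (INR (fiber_card U M n m psi c i)) / lnX i).
    by apply: Rmult_le_pos => //; apply: Rlt_le; apply: Rinv_0_lt_compat.
  move: hl => /= hl; lra.
- move=> h K; apply: uf_up h => i ->; by rewrite eqxx.
Qed.

Lemma di_fin n m psi c x : delta_is U M X n m psi c (Rbar.Finite x) <->
  forall eps, (0 < eps) -> uf U (fun i => (0 < fiber_card U M n m psi c i)%N /\
    ((x - eps) * lnX i < ln (INR (fiber_card U M n m psi c i)) /\
     ln (INR (fiber_card U M n m psi c i)) < (x + eps) * lnX i)).
Proof.
rewrite /delta_is /ulim /delta_ratio; split.
- move=> h eps he; apply: uf_up (uf_cap (h eps he) XL) => i [].
  case: eqP => [_ [y [e]]|hn [y [[<-] hy]] hx]; first by [].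
  split; first by rewrite lt0n; apply/eqP.
  by apply/div_bounds => //; apply: lnN_gt0.
- move=> h eps he; apply: uf_up (uf_cap (h eps he) XL) => i [[h0 hb] hx].
  case: eqP => [e|hn]; first by rewrite e in h0.
  exists (ln (INR (fiber_card U M n m psi c i)) / lnX i); split=> //.
  by apply/div_bounds => //; apply: lnN_gt0.
Qed.

End Delta.
Local Open Scope nat_scope.
Definition concat (T : Type) (n m : nat) (x : 'I_n -> T) (c : 'I_m -> T) : 'I_(n + m) -> T :=
  fun j => match split j with inl a => x a | inr b => c b end.

Lemma ext_lt (T : Type) (w : T) n (x : 'I_n -> T) k (hk : k < n) : ext w x k = x (Ordinal hk).
Proof. by rewrite /ext insubT. Qed.

Lemma ext_ge (T : Type) (w : T) n (x : 'I_n -> T) k : n <= k -> ext w x k = w.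
Proof. by move=> hk; rewrite /ext insubF // ltnNge hk. Qed.

Lemma ext_concat (T : Type) (w : T) n m (x : 'I_n -> T) (c : 'I_m -> T) k :
  ext w (concat x c) k = Defs.tval w x c k.
Proof.
rewrite /Defs.tval; case: (ltnP k n) => hk.
  have hk' : k < n + m by apply: leq_trans hk (leq_addr _ _).
  rewrite (ext_lt _ _ hk') (ext_lt _ _ hk) /concat; case: splitP => j /= ej.
    by congr x; apply: val_inj.
  by exfalso; have := hk; rewrite ej ltnNge leq_addr.
case: (ltnP k (n + m)) => hk2.
  have hk3 : k - n < m by rewrite ltn_subLR.
  rewrite (ext_lt _ _ hk2) (ext_lt _ _ hk3) /concat; case: splitP => j /= ej.
    by exfalso; have := ltn_ord j; rewrite -ej ltnNge hk.
  by congr c; apply: val_inj; rewrite /= ej addKn.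
rewrite !ext_ge //; by rewrite leq_subRL.
Qed.

Lemma ext_app (I : Type) (T : I -> Type) (w : forall i, T i) n (x : 'I_n -> forall i, T i) k i :
  ext w x k i = ext (w i) (fun j => x j i) k.
Proof. by rewrite /ext; case: insub. Qed.

Lemma tval_app (I : Type) (T : I -> Type) (w : forall i, T i) n m (x : 'I_n -> forall i, T i)
  (c : 'I_m -> forall i, T i) k i :
  Defs.tval w x c k i = Defs.tval (w i) (fun j => x j i) (fun j => c j i) k.
Proof. by rewrite /Defs.tval; case: ifP => _; rewrite ext_app. Qed.

Lemma concat_app (I : Type) (T : I -> Type) n m (x : 'I_n -> forall i, T i)
  (c : 'I_m -> forall i, T i) i :
  (fun j => concat x c j i) = concat (fun j => x j i) (fun j => c j i).
Proof. by apply: funext => j; rewrite /concat; case: split. Qed.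

Lemma tval_cons (T : Type) (w : T) n m (h : 'I_n.+1 -> T) (c : 'I_m -> T) :
  Defs.tval w h c =1 Defs.tval w (fun _ : 'I_1 => h ord0) (concat (fun j : 'I_n => h (lift ord0 j)) c).
Proof.
move=> k; rewrite [RHS]/Defs.tval; case: k => [|k].
  by rewrite /= (ext_lt _ _ (ltn0Sn 0)) /Defs.tval /= (ext_lt _ _ (ltn0Sn n)); congr h; apply: val_inj.
rewrite /= subSS subn0 ext_concat /Defs.tval ltnS; case: (ltnP k n) => hk.
  rewrite (ext_lt _ _ hk).
  have hk' : k.+1 < n.+1 by [].
  by rewrite (ext_lt _ _ hk'); congr h; apply: val_inj.
by rewrite subSS.
Qed.

Lemma tval_nil (T : Type) (w : T) m (h : 'I_0 -> T) (c : 'I_m -> T) :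
  Defs.tval w h c =1 ext w c.
Proof. by move=> k; rewrite /Defs.tval /= subn0. Qed.
Lemma card_cons (T : finType) n (R : T -> {ffun 'I_n -> T} -> bool) :
  #|[set a : {ffun 'I_n.+1 -> T} | R (a ord0) [ffun j => a (lift ord0 j)]]| =
  \sum_(x' : {ffun 'I_n -> T}) #|[set a0 : {ffun 'I_1 -> T} | R (a0 ord0) x']|.
Proof.
pose f (a : {ffun 'I_n.+1 -> T}) := (a ord0, [ffun j => a (lift ord0 j)]).
have finj : injective f.
  move=> a b [e1 /ffunP e2]; apply/ffunP => j.
  case: (unliftP ord0 j) => [j'|] ->; last by [].
  by have := e2 j'; rewrite !ffunE.
rewrite -(card_imset _ finj).
have -> : f @: [set a : {ffun 'I_n.+1 -> T} | R (a ord0) [ffun j => a (lift ord0 j)]] = [set p | R p.1 p.2].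
  apply/setP => p; rewrite inE; apply/imsetP/idP.
    by case=> a; rewrite inE => h ->.
  move=> h; exists [ffun j => if unlift ord0 j is Some j' then p.2 j' else p.1].
    rewrite inE ffunE unlift_none.
    have -> : [ffun j => [ffun j0 => if unlift ord0 j0 is Some j' then p.2 j' else p.1] (lift ord0 j)] = p.2.
      by apply/ffunP => j; rewrite !ffunE liftK.
    by [].
  case: p h => y x' h; rewrite /f ffunE unlift_none; congr pair.
  by apply/ffunP => j; rewrite !ffunE liftK.
rewrite -sum1_card.
rewrite (eq_bigl (fun p => R p.1 p.2)); last by move=> p; rewrite inE.
rewrite -(pair_big_dep xpredT (fun y x' => R y x') (fun _ _ => 1)) /=.
rewrite (eq_bigr (fun i => \sum_j (if R i j then 1 else 0))); last by move=> i _; rewrite big_mkcond.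
rewrite exchange_big /=; apply: eq_bigr => x' _.
rewrite -big_mkcond /=.
pose g (a0 : {ffun 'I_1 -> T}) := a0 ord0.
have ginj : injective g.
  by move=> a b e; apply/ffunP => j; rewrite [j]ord1.
rewrite -(card_imset _ ginj).
have -> : g @: [set a0 : {ffun 'I_1 -> T} | R (a0 ord0) x'] = [set y | R y x'].
  apply/setP => y; rewrite inE; apply/imsetP/idP.
    by case=> a; rewrite inE => h ->.
  move=> h; exists [ffun _ => y]; by rewrite ?inE /g ?ffunE.
rewrite sum1_card; apply: eq_card => y; by rewrite inE.
Qed.
Lemma sum_lb (K : finType) (F : K -> nat) (S : {set K}) (x0 : K) : x0 \in S ->
  exists2 xm, xm \in S & #|S| * F xm <= \sum_x F x.
Proof.
move=> h0; case: (arg_minnP F h0) => xm hxm hmin; exists xm => //.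
rewrite -sum_nat_const.
apply: (@leq_trans (\sum_(x in S) F x)); first by apply: leq_sum => x hx; apply: hmin.
rewrite [X in _ <= X](bigID (fun x => x \in S)) /=; exact: leq_addr.
Qed.

Lemma sum_ub (K : finType) (F : K -> nat) r (S : nat -> {set K}) :
  (forall x, 0 < F x -> exists2 k, k < r.+1 & x \in S k) ->
  0 < \sum_x F x ->
  exists2 k, k < r.+1 & exists2 xk, xk \in S k & \sum_x F x <= r.+1 * (#|S k| * F xk).
Proof.
move=> hcov hpos.
pose Fm (k : nat) := \max_(x in S k) F x.
have h1 : \sum_x F x <= \sum_(k < r.+1) (#|S k| * Fm k).
  apply: (@leq_trans (\sum_x \sum_(k < r.+1) (if x \in S k then F x else 0))).
    apply: leq_sum => x _; case: (posnP (F x)) => [->//|hx].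
    have [k hk hxk] := hcov x hx.
    rewrite (bigD1 (Ordinal hk)) //= hxk; exact: leq_addr.
  rewrite exchange_big /=; apply: leq_sum => k _.
  rewrite -big_mkcond /= -sum_nat_const; apply: leq_sum => x hx.
  exact: leq_bigmax_cond.
have [k0 ek0] := @eq_bigmax _ (fun k : 'I_r.+1 => #|S k| * Fm k) (ltac:(by rewrite card_ord)).
have h2 : \sum_(k < r.+1) (#|S k| * Fm k) <= r.+1 * (#|S k0| * Fm k0).
  rewrite -ek0 -[X in X * _](card_ord r.+1) -sum_nat_const.
  apply: leq_sum => k _; exact: (leq_bigmax (F := fun k : 'I_r.+1 => #|S k| * Fm k) k).
have hp : 0 < #|S k0| * Fm k0.
  rewrite lt0n; apply/negP => /eqP e; move: (leq_trans h1 h2); rewrite e muln0 leqn0 => /eqP e'.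
  by rewrite e' in hpos.
have hS : 0 < #|S k0| by move: hp; rewrite muln_gt0 => /andP [].
have [xk hxk exk] := eq_bigmax_cond F hS.
exists k0 => //; exists xk => //.
apply: leq_trans h1 (leq_trans h2 _); by rewrite /Fm exk.
Qed.
Section Combine.
Variables (I : Type) (U : ultrafilter I).

Lemma uf_big' (K : nat) (A : nat -> I -> Prop) :
  (forall k, k < K -> uf U (A k)) -> uf U (fun i => forall k, k < K -> A k i).
Proof.
elim: K => [|K IH] h.
  by apply: uf_up (uf_T U) => i _ k.
apply: uf_up (uf_cap (IH (fun k hk => h k (ltnW hk))) (h K (ltnSn K))).
move=> i [h1 h2] k; rewrite ltnS leq_eqVlt => /orP [/eqP -> //|]; exact: h1.
Qed.

Local Open Scope R_scope.
Variables (lnX : I -> R) (r : nat) (N : I -> nat) (G : nat -> I -> nat).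
Hypothesis unb : forall B, uf U (fun i => B < lnX i).
Hypothesis HL : forall k, (k < r.+1)%N -> forall eps, 0 < eps -> uf U (fun i =>
  (0 < G k i)%N -> (0 < N i)%N /\ ln (INR (G k i)) + (INR k - eps) * lnX i < ln (INR (N i))).
Hypothesis HU : forall eps, 0 < eps -> uf U (fun i => (0 < N i)%N ->
  exists2 k, (k < r.+1)%N & (0 < G k i)%N /\
     ln (INR (N i)) <= ln (INR r.+1) + ln (INR (G k i)) + (INR k + eps) * lnX i).

Lemma comb_minf : (forall k, (k < r.+1)%N -> uf U (fun i => G k i = 0%N)) ->
  uf U (fun i => N i = 0%N).
Proof.
move=> h; apply: uf_up (uf_cap (uf_big' h) (HU Rlt_0_1)) => i [h1 h2].
case: (posnP (N i)) => // hp; have [k hk [hg _]] := h2 hp.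
by rewrite h1 in hg.
Qed.

Lemma comb_fin (o : nat -> option nat) k0 v0 :
  (forall k, (k < r.+1)%N -> o k = None -> uf U (fun i => G k i = 0%N)) ->
  (forall k v, (k < r.+1)%N -> o k = Some v -> forall eps, 0 < eps -> uf U (fun i =>
     (0 < G k i)%N /\ (INR v - eps) * lnX i < ln (INR (G k i)) /\
     ln (INR (G k i)) < (INR v + eps) * lnX i)) ->
  (k0 < r.+1)%N -> o k0 = Some v0 ->
  (forall k v, (k < r.+1)%N -> o k = Some v -> (v + k <= v0 + k0)%N) ->
  forall eps, 0 < eps -> uf U (fun i => (0 < N i)%N /\
     (INR (v0 + k0) - eps) * lnX i < ln (INR (N i)) /\
     ln (INR (N i)) < (INR (v0 + k0) + eps) * lnX i).
Proof.
move=> hN hS hk0 ho0 hmax eps he.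
have he2 : 0 < eps / 2 by lra.
have he3 : 0 < eps / 3 by lra.
set j := (v0 + k0)%N.
have A := uf_cap (uf_cap (hS _ _ hk0 ho0 _ he2) (HL hk0 he2)) (unb 0).
have B1 : uf U (fun i => 0 < lnX i -> forall k, (k < r.+1)%N -> (0 < G k i)%N ->
    ln (INR (G k i)) < (INR j - INR k + eps / 3) * lnX i).
  apply: uf_up (uf_big' (A := fun k i => 0 < lnX i -> (0 < G k i)%N ->
    ln (INR (G k i)) < (INR j - INR k + eps / 3) * lnX i) _).
    by move=> i h hX k hk; apply: (h k hk hX).
  move=> k hk; case ek: (o k) => [v|].
    apply: uf_up (hS _ _ hk ek _ he3) => i [_ [_ h]] hX _.
    have hv : INR v <= INR j - INR k.
      have := hmax _ _ hk ek => /leP /le_INR; rewrite plus_INR /j; lra.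
    nra.
  by apply: uf_up (hN _ hk ek) => i -> _.
have B3 := unb (3 * ln (INR r.+1) / eps).
apply: uf_up (uf_cap (uf_cap A B1) (uf_cap (HU he3) B3)).
move=> i [[[[[hg [hl1 hl2]] hL] hX] hB1] [hU hB3]].
have [hN0 hlow] := hL hg.
split=> //.
have hj : INR j = INR v0 + INR k0 by rewrite /j plus_INR.
split; first nra.
have [k hk [hgk hup]] := hU hN0.
have := hB1 hX k hk hgk => hb.
have hln : ln (INR r.+1) < eps / 3 * lnX i.
  have -> : ln (INR r.+1) = eps / 3 * (3 * ln (INR r.+1) / eps) by field; lra.
  nra.
nra.
Qed.

End Combine.
Local Open Scope nat_scope.

Lemma max_opt (o : nat -> option nat) K : (exists k, k < K /\ o k <> None) ->
  exists k0 v0, [/\ k0 < K, o k0 = Some v0 &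
    forall k v, k < K -> o k = Some v -> v + k <= v0 + k0].
Proof.
elim: K => [|K IH] [k [hk ho]]; first by [].
case: (pselect (exists k, k < K /\ o k <> None)) => h.
- have [k0 [v0 [hk0 e0 hm]]] := IH h.
  case eK: (o K) => [vK|].
  + case: (leqP (vK + K) (v0 + k0)) => hle.
      exists k0, v0; split => //; first exact: ltnW.
      move=> k' v; rewrite ltnS leq_eqVlt => /orP [/eqP ek|hk'] e.
        by move: e; rewrite ek eK => -[<-].
      exact: hm.
    exists K, vK; split => //.
    move=> k' v; rewrite ltnS leq_eqVlt => /orP [/eqP ek|hk'] e.
      by move: e; rewrite ek eK => -[<-].
    exact: ltnW (leq_ltn_trans (hm _ _ hk' e) hle).
  + exists k0, v0; split => //; first exact: ltnW.
    move=> k' v; rewrite ltnS leq_eqVlt => /orP [/eqP ek|hk'] e.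
      by move: e; rewrite ek eK.
    exact: hm.
- have hkK : k = K.
    move: hk; rewrite ltnS leq_eqVlt => /orP [/eqP //|hk].
    by case: h; exists k.
  case eK: (o K) => [vK|]; last by move: ho; rewrite hkK eK.
  exists K, vK; split => //.
  move=> k' v; rewrite ltnS leq_eqVlt => /orP [/eqP ek|hk'] e.
    by move: e; rewrite ek eK => -[<-].
  by case: h; exists k'; rewrite e.
Qed.

Section Main.
Variables (L : language) (I : Type) (U : ultrafilter I) (M : I -> finStructure L).
Variables (d : nat) (X : forall i, {set {ffun 'I_d -> fs_car (M i)}}).
Hypothesis XL : uf U (fun i => (1 < #|X i|)%N).
Variable r : nat.
Hypothesis M_infinite : exists a : nat -> scar (ultraprod U M),
      forall j j' : nat, @seqr L (ultraprod U M) (a j) (a j') -> j = j'.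
Hypothesis H_values : forall (m : nat) (phi : formula L), fv_lt (1 + m) phi ->
     forall b : 'I_m -> scar (ultraprod U M),
       delta_is U M X 1 m phi b m_infty \/
       exists k : nat, (k <= r)%N /\ delta_is U M X 1 m phi b (Rbar.Finite (INR k)).
Hypothesis H_def : forall (m : nat) (phi : formula L), fv_lt (1 + m) phi ->
     forall k : nat, (k <= r)%N ->
       definable0 U M m (fun b => delta_is U M X 1 m phi b (Rbar.Finite (INR k))).
Local Notation UP := (ultraprod U M).
Local Notation FS i := (fin_struct (M i)).
Local Notation lnX i := (ln (INR #|X i|)).
Local Open Scope R_scope.

Lemma lnX_pos : uf U (fun i => 0 < lnX i).
Proof. by apply: uf_up XL => i; apply: lnN_gt0. Qed.

Lemma card_fs_gt0 i : (0 < #|fs_car (M i)|)%N.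
Proof. by apply/card_gt0P; exists (fs_wit (M i)). Qed.

Lemma lnX_unb (B : R) : uf U (fun i => B < lnX i).
Proof.
pose phi := fEq (tvar L 0) (tvar L 0).
have fv : fv_lt (1 + 0) phi by move=> j /= [] ->.
have hfc : forall b i, fiber_card U M 1 0 phi b i = #|fs_car (M i)|.
  move=> b i; rewrite /fiber_card.
  transitivity #|[set: {ffun 'I_1 -> fs_car (M i)}]|.
    by apply: eq_card => a; rewrite !inE; apply/asboolP.
  by rewrite cardsT card_ffun card_ord expn1.
pose b0 : 'I_0 -> scar UP := fun _ => ultraprod_wit U M.
case: (H_values fv b0) => [hm|[k [hk hd]]].
  move/(di_minf XL): hm => h; case: (uf_ex h) => i; rewrite hfc => e.
  by have := card_fs_gt0 i; rewrite e.
move/(di_fin XL): hd => /(_ 1 Rlt_0_1) hd.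
case: M_infinite => a ha.
have [K hK] := INR_unbounded (exp ((INR r + 1) * Rabs B)).
have hK0 : (0 < K)%N.
  case: K hK => // hK; have := exp_pos ((INR r + 1) * Rabs B); rewrite /= in hK; lra.
have hdist : uf U (fun i => forall j, (j < K)%N -> forall j', (j' < K)%N -> j <> j' -> a j i <> a j' i).
  apply: uf_big => j hj; apply: uf_big => j' hj'.
  case: (pselect (j = j')) => [e|ne].
    by apply: uf_up (uf_T U) => i _ h; case: h.
  have : ~ uf U (fun i => a j i = a j' i) by move=> h; apply: ne; apply: ha.
  by move/uf_notE; apply: uf_up => i h1 _.
have hcard : uf U (fun i => (K <= #|fs_car (M i)|)%N).
  apply: uf_up hdist => i h.
  have inj : injective (fun j : 'I_K => a j i).
    move=> j j' e; apply: val_inj; case: (pselect (nat_of_ord j = j')) => // ne.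
    by case: (h j (ltn_ord j) j' (ltn_ord j') ne e).
  by have := leq_card _ inj; rewrite card_ord.
apply: uf_up (uf_cap (uf_cap hd hcard) lnX_pos) => i [[[_ [_ hup]] hc] hX].
rewrite hfc in hup.
have h1 := lnN_le hK0 hc.
have h2 : (INR r + 1) * Rabs B < ln (INR K).
  rewrite -[X in X < _]ln_exp; apply: ln_increasing => //; apply: exp_pos.
have h3 : INR k <= INR r by apply: le_INR; apply/leP.
have h4 := Rle_abs B.
have h5 := pos_INR r.
nra.
Qed.

Lemma di_uniq n m psi c t t' : delta_is U M X n m psi c t -> delta_is U M X n m psi c t' -> t = t'.
Proof. exact: ulim_unique. Qed.

Definition Pn n := forall m (psi : formula L), fv_lt (n + m) psi ->
  (forall c, delta_is U M X n m psi c m_infty \/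
     exists k, (k <= n * r)%N /\ delta_is U M X n m psi c (Rbar.Finite (INR k))) /\
  definable0 U M m (fun c => delta_is U M X n m psi c m_infty) /\
  (forall k, definable0 U M m (fun c => delta_is U M X n m psi c (Rbar.Finite (INR k)))).

Lemma fc0 m psi (c : 'I_m -> scar UP) i : fiber_card U M 0 m psi c i =
  (if `[< sat (S := FS i) (ext (fs_wit (M i)) (fun j => c j i)) psi >] then 1 else 0)%N.
Proof.
rewrite /fiber_card; case: asboolP => h.
  transitivity #|[set: {ffun 'I_0 -> fs_car (M i)}]|.
    apply: eq_card => a; rewrite !inE; apply/asboolP; move: h; apply: sat_imp => k.
    by rewrite tval_nil.
  by rewrite cardsT card_ffun card_ord expn0.
apply: eq_card0 => a; rewrite !inE; apply/asboolP => h'; apply: h; move: h'.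
by apply: sat_imp => k; rewrite tval_nil.
Qed.

Lemma P0 : Pn 0.
Proof.
move=> m psi hpsi.
pose S := fun c : 'I_m -> scar UP => sat (S := UP) (ext (ultraprod_wit U M) c) psi.
have hS : forall c, S c <-> uf U (fun i => sat (S := FS i) (ext (fs_wit (M i)) (fun j => c j i)) psi).
  move=> c; rewrite /S los; split; apply: uf_up => i; apply: sat_imp => k; by rewrite ext_app.
have hval : forall c, (S c -> delta_is U M X 0 m psi c (Rbar.Finite 0)) /\
                      (~ S c -> delta_is U M X 0 m psi c m_infty).
  move=> c; split.
  - move/hS => h; apply/(di_fin XL) => eps he.
    apply: uf_up (uf_cap h lnX_pos) => i [hi hX]; rewrite fc0; case: asboolP => // _.
    split => //; change (INR 1) with 1; rewrite ln_1; have := Rmult_lt_0_compat _ _ he hX; split; lra.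
  - move=> hn; apply/(di_minf XL); have : ~ uf U (fun i => sat (S := FS i) (ext (fs_wit (M i)) (fun j => c j i)) psi) by rewrite -hS.
    by move/uf_notE; apply: uf_up => i hi; rewrite fc0; case: asboolP.
have hdefS : definable0 U M m S by exists psi.
split; [|split].
- move=> c; case: (pselect (S c)) => h.
    by right; exists 0%N; split => //; exact: (hval c).1 h.
  by left; exact: (hval c).2 h.
- apply: def_iff (def_not hdefS) _ => c; split => h.
    exact: (hval c).2 h.
  by move=> hs; have := di_uniq ((hval c).1 hs) h.
- move=> k; apply: def_iff (def_const (k = 0%N) hdefS) _ => c; split.
    by move=> [-> hs]; exact: (hval c).1 hs.
  move=> h; case: (pselect (S c)) => hs; last by have := di_uniq ((hval c).2 hs) h.
  have := di_uniq ((hval c).1 hs) h => -[e]; split => //.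
  by apply: INR_eq; rewrite -e.
Qed.


Section Step.
Variables (n m : nat) (psi : formula L) (theta : nat -> formula L).
Hypothesis hpsi1 : fv_lt (1 + (n + m)) psi.
Hypothesis htheta : forall k, (k <= r)%N -> fv_lt (n + m) (theta k) /\
  forall b, delta_is U M X 1 (n + m) psi b (Rbar.Finite (INR k)) <->
            sat (S := UP) (ext (ultraprod_wit U M) b) (theta k).
Hypothesis IHv : forall k, (k <= r)%N -> forall c,
  delta_is U M X n m (theta k) c m_infty \/
  exists v, (v <= n * r)%N /\ delta_is U M X n m (theta k) c (Rbar.Finite (INR v)).

Section StepC.
Variable c : 'I_m -> scar UP.

Definition Ffib i (x' : {ffun 'I_n -> fs_car (M i)}) : nat :=
  #|[set a0 : {ffun 'I_1 -> fs_car (M i)} | `[< sat (S := FS i)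
      (Defs.tval (fs_wit (M i)) (fun j => a0 j) (concat (fun j => x' j) (fun j => c j i))) psi >]]|.

Arguments Ffib : clear implicits.

Definition Sset k i : {set {ffun 'I_n -> fs_car (M i)}} :=
  [set x' : {ffun 'I_n -> fs_car (M i)} | `[< sat (S := FS i) (Defs.tval (fs_wit (M i)) (fun j => x' j) (fun j => c j i)) (theta k) >]].

Lemma card_Sset k i : #|Sset k i| = fiber_card U M n m (theta k) c i.
Proof. by []. Qed.

Lemma N_sum i : fiber_card U M n.+1 m psi c i = (\sum_x' Ffib i x')%N.
Proof.
pose R := fun (y : fs_car (M i)) (x' : {ffun 'I_n -> fs_car (M i)}) =>
  `[< sat (S := FS i) (Defs.tval (fs_wit (M i)) (fun _ : 'I_1 => y)
        (concat (fun j => x' j) (fun j => c j i))) psi >].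
transitivity (\sum_(x' : {ffun 'I_n -> fs_car (M i)})
   #|[set a0 : {ffun 'I_1 -> fs_car (M i)} | R (a0 ord0) x']|)%N.
  rewrite -card_cons /fiber_card; apply: eq_card => a; rewrite !inE /R.
  apply: asbool_equiv_eq; apply: sat_ext => k; rewrite tval_cons.
  congr Defs.tval; congr concat; apply: funext => j; by rewrite ffunE.
apply: eq_bigr => x' _; apply: eq_card => a0; rewrite !inE /R.
apply: asbool_equiv_eq; apply: sat_ext => k.
by congr Defs.tval; apply: funext => j; rewrite [j]ord1.
Qed.

Lemma val_eq (x'up : 'I_n -> scar UP) i :
  (fun kk => ext (ultraprod_wit U M) (concat x'up c) kk i) =1
  Defs.tval (fs_wit (M i)) (fun j => [ffun j => x'up j i] j) (fun j => c j i).
Proof.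
move=> kk; rewrite ext_app concat_app ext_concat.
by congr Defs.tval; apply: funext => j; rewrite ffunE.
Qed.

Lemma bridge_sat k (x'up : 'I_n -> scar UP) :
  sat (S := UP) (ext (ultraprod_wit U M) (concat x'up c)) (theta k) <->
  uf U (fun i => [ffun j => x'up j i] \in Sset k i).
Proof.
rewrite los; split; apply: uf_up => i; rewrite inE.
  by move=> h; apply/asboolP; move: h; apply: sat_imp; apply: val_eq.
by move/asboolP; apply: sat_imp => kk; rewrite val_eq.
Qed.

Lemma bridge_fc (x'up : 'I_n -> scar UP) i :
  fiber_card U M 1 (n + m) psi (concat x'up c) i = Ffib i [ffun j => x'up j i].
Proof.
rewrite /fiber_card /Ffib concat_app.
have -> : (fun j => [ffun j => x'up j i] j) = (fun j => x'up j i).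
  by apply: funext => j; rewrite ffunE.
by [].
Qed.

Lemma pick_fun (P : forall i, {ffun 'I_n -> fs_car (M i)} -> Prop) :
  exists y : forall i, {ffun 'I_n -> fs_car (M i)}, forall i, (exists x', P i x') -> P i (y i).
Proof.
have H : forall i, exists y : {ffun 'I_n -> fs_car (M i)}, (exists x', P i x') -> P i y.
  move=> i; case: (pselect (exists x', P i x')) => [[x' hx']|hn].
    by exists x'.
  by exists [ffun _ => fs_wit (M i)].
exists (fun i => proj1_sig (cid (H i))) => i; exact: (proj2_sig (cid (H i))).
Qed.

Lemma U1 k (hk : (k <= r)%N) eps (he : 0 < eps) : uf U (fun i => forall x', x' \in Sset k i ->
  (0 < Ffib i x')%N /\ (INR k - eps) * lnX i < ln (INR (Ffib i x')) /\
  ln (INR (Ffib i x')) < (INR k + eps) * lnX i).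
Proof.
pose good := fun i (x' : {ffun 'I_n -> fs_car (M i)}) => (0 < Ffib i x')%N /\
  (INR k - eps) * lnX i < ln (INR (Ffib i x')) /\ ln (INR (Ffib i x')) < (INR k + eps) * lnX i.
case: (uf_ultra U (fun i => forall x', x' \in Sset k i -> good i x')) => // hn.
exfalso.
have [y hy] := pick_fun (fun i x' => x' \in Sset k i /\ ~ good i x').
pose x'up : 'I_n -> scar UP := fun j i => y i j.
have ey : forall i, [ffun j => x'up j i] = y i by move=> i; apply/ffunP => j; rewrite ffunE.
have hw : uf U (fun i => y i \in Sset k i /\ ~ good i (y i)).
  apply: uf_up hn => i hi; apply: hy.
  case: (pselect (exists x', x' \in Sset k i /\ ~ good i x')) => // hne.
  case: hi => x' hx'; case: (pselect (good i x')) => // hg.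
  by case: hne; exists x'; split => //; move=> hg'; apply: hg'; apply: hg.
have hsat : sat (S := UP) (ext (ultraprod_wit U M) (concat x'up c)) (theta k).
  by apply/bridge_sat; apply: uf_up hw => i [h _]; rewrite ey.
have hd := (proj2 ((htheta hk).2 _)) hsat.
move/(di_fin XL)/(_ eps he): hd => hd.
case: (uf_ex (uf_cap hd hw)) => i [h1 [_ h3]]; apply: h3.
by rewrite /good -(ey i) -bridge_fc.
Qed.

Lemma U2 : uf U (fun i => forall x', (0 < Ffib i x')%N -> exists2 k, (k < r.+1)%N & x' \in Sset k i).
Proof.
pose bad := fun i (x' : {ffun 'I_n -> fs_car (M i)}) => (0 < Ffib i x')%N /\
  forall k, (k < r.+1)%N -> x' \notin Sset k i.
case: (uf_ultra U (fun i => forall x', (0 < Ffib i x')%N -> exists2 k, (k < r.+1)%N & x' \in Sset k i)) => // hn.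
exfalso.
have [y hy] := pick_fun bad.
pose x'up : 'I_n -> scar UP := fun j i => y i j.
have ey : forall i, [ffun j => x'up j i] = y i by move=> i; apply/ffunP => j; rewrite ffunE.
have hw : uf U (fun i => bad i (y i)).
  apply: uf_up hn => i hi; apply: hy.
  case: (pselect (exists x', bad i x')) => // hne.
  case: hi => x' hx'; case: (pselect (exists2 k, (k < r.+1)%N & x' \in Sset k i)) => // hk.
  case: hne; exists x'; split => // k hk'; apply/negP => hin; apply: hk; by exists k.
case: (H_values hpsi1 (concat x'up c)) => [hm|[k [hk hd]]].
  move/(di_minf XL): hm => hm; case: (uf_ex (uf_cap hm hw)) => i [h1 [h2 _]].
  by rewrite bridge_fc ey in h1; rewrite h1 in h2.
have := (proj1 ((htheta hk).2 _)) hd => /bridge_sat hs.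
case: (uf_ex (uf_cap hs hw)) => i [h1 [_ h2]]; rewrite ey in h1.
by case/negP: (h2 k hk).
Qed.

Local Notation NN := (fun i => fiber_card U M n.+1 m psi c i).
Local Notation GG := (fun k i => fiber_card U M n m (theta k) c i).

Lemma HLc k : (k < r.+1)%N -> forall eps, 0 < eps -> uf U (fun i =>
  (0 < GG k i)%N -> (0 < NN i)%N /\ ln (INR (GG k i)) + (INR k - eps) * lnX i < ln (INR (NN i))).
Proof.
move=> hk eps he; apply: uf_up (U1 hk he) => i h hG.
rewrite -card_Sset in hG *.
case/card_gt0P: (hG) => x0 hx0.
have [xm hxm hle] := sum_lb (Ffib i) hx0.
have [hF [hF1 _]] := h xm hxm.
have hp : (0 < #|Sset k i| * Ffib i xm)%N by rewrite muln_gt0 hG.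
rewrite N_sum; split; first exact: leq_trans hp hle.
have := lnN_le hp hle; rewrite lnN_mul //; lra.
Qed.

Lemma HUc eps : 0 < eps -> uf U (fun i => (0 < NN i)%N ->
  exists2 k, (k < r.+1)%N & (0 < GG k i)%N /\
     ln (INR (NN i)) <= ln (INR r.+1) + ln (INR (GG k i)) + (INR k + eps) * lnX i).
Proof.
move=> he; apply: uf_up (uf_cap U2 (uf_big (fun k (hk : (k < r.+1)%N) => U1 hk he))).
move=> i [hcov hgood] hN; rewrite N_sum in hN.
have [k hk [xk hxk hle]] := sum_ub (r := r) (S := fun k => Sset k i) hcov hN.
exists k => //; have [hF [_ hF2]] := hgood k hk xk hxk.
have hS : (0 < #|Sset k i|)%N by apply/card_gt0P; exists xk.
rewrite -!card_Sset; split => //; rewrite N_sum.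
have hp : (0 < r.+1 * (#|Sset k i| * Ffib i xk))%N by rewrite !muln_gt0 hS hF.
have := lnN_le hN hle; rewrite !lnN_mul // ?muln_gt0 ?hS ?hF //; lra.
Qed.

Lemma step_val :
  (delta_is U M X n.+1 m psi c m_infty /\
     forall k, (k < r.+1)%N -> delta_is U M X n m (theta k) c m_infty) \/
  exists k0 v0, [/\ (k0 < r.+1)%N, (v0 <= n * r)%N,
     delta_is U M X n m (theta k0) c (Rbar.Finite (INR v0)),
     (forall k v, (k < r.+1)%N -> delta_is U M X n m (theta k) c (Rbar.Finite (INR v)) ->
        (v + k <= v0 + k0)%N) &
     delta_is U M X n.+1 m psi c (Rbar.Finite (INR (v0 + k0)))].
Proof.
have [o ho] : exists o : nat -> option nat, forall k, (k < r.+1)%N ->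
    match o k with None => delta_is U M X n m (theta k) c m_infty
    | Some v => (v <= n * r)%N /\ delta_is U M X n m (theta k) c (Rbar.Finite (INR v)) end.
  have /choice [o ho] : forall k, exists o : option nat, (k < r.+1)%N ->
    match o with None => delta_is U M X n m (theta k) c m_infty
    | Some v => (v <= n * r)%N /\ delta_is U M X n m (theta k) c (Rbar.Finite (INR v)) end.
    move=> k; case: (pselect (k < r.+1)%N) => hk; last by exists None.
    by case: (IHv hk c) => [h|[v [hv h]]]; [exists None | exists (Some v)].
  by exists o.
case: (pselect (exists k, (k < r.+1)%N /\ o k <> None)) => hex.
- right; have [k0 [v0 [hk0 ho0 hmax]]] := max_opt hex.
  have := ho k0 hk0; rewrite ho0 => -[hv0 hd0].
  exists k0, v0; split => //.
  + move=> k v hk hd; have := ho k hk; case eo: (o k) => [v'|] h.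
      case: h => _ h; have := di_uniq h hd => -[e].
      by rewrite -(INR_eq _ _ e); exact: hmax hk eo.
    by have := di_uniq h hd.
  + apply/(di_fin XL).
    apply: (comb_fin (lnX := fun i => lnX i) (N := NN) (G := GG) lnX_unb HLc HUc (o := o)) => //.
    * move=> k hk eo; have := ho k hk; rewrite eo => h; exact/(di_minf XL).
    * move=> k v hk eo; have := ho k hk; rewrite eo => -[_ h]; exact/(di_fin XL).
- left.
  have hall : forall k, (k < r.+1)%N -> delta_is U M X n m (theta k) c m_infty.
    move=> k hk; have := ho k hk; case eo: (o k) => [v|] h //.
    by case: hex; exists k; rewrite eo.
  split => //; apply/(di_minf XL).
  apply: (comb_minf (lnX := fun i => lnX i) (N := NN) (G := GG) HUc).
  by move=> k hk; apply/(di_minf XL); exact: hall.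
Qed.

End StepC.
End Step.

Lemma step n : Pn n -> Pn n.+1.
Proof.
move=> IH m psi hpsi.
have hpsi1 : fv_lt (1 + (n + m)) psi by move=> j /hpsi; rewrite add1n addSn.
have [theta htheta] : exists theta : nat -> formula L, forall k, (k <= r)%N ->
    fv_lt (n + m) (theta k) /\ forall b, delta_is U M X 1 (n + m) psi b (Rbar.Finite (INR k)) <->
       sat (S := UP) (ext (ultraprod_wit U M) b) (theta k).
  have /choice [th hth] : forall k, exists th, (k <= r)%N ->
    fv_lt (n + m) th /\ forall b, delta_is U M X 1 (n + m) psi b (Rbar.Finite (INR k)) <->
       sat (S := UP) (ext (ultraprod_wit U M) b) th.
    move=> k; case: (pselect (k <= r)%N) => hk; last by exists psi.
    by have [th [fv h]] := H_def hpsi1 hk; exists th.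
  by exists th.
have IHk := fun k (hk : (k <= r)%N) => IH _ _ (htheta k hk).1.
have IHv : forall k, (k <= r)%N -> forall c,
  delta_is U M X n m (theta k) c m_infty \/
  exists v, (v <= n * r)%N /\ delta_is U M X n m (theta k) c (Rbar.Finite (INR v)).
  by move=> k hk; exact: (IHk k hk).1.
have sv := step_val hpsi1 htheta IHv.
split; [|split].
- move=> c; case: (sv c) => [[h _]|[k0 [v0 [hk0 hv0 _ _ h]]]]; [by left | right].
  exists (v0 + k0)%N; split => //.
  by rewrite mulSn addnC; apply: leq_add.
- apply: def_iff (def_forall (K := r.+1) (P := fun k c => delta_is U M X n m (theta k) c m_infty) _) _.
    by move=> k hk; exact: (IHk k hk).2.1.
  move=> c; split.
    move=> hall; case: (sv c) => [[h _] //|[k0 [v0 [hk0 _ hd _ _]]]].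
    by have := di_uniq (hall k0 hk0) hd.
  move=> h; case: (sv c) => [[_ hall] //|[k0 [v0 [_ _ _ _ hd]]]].
  by have := di_uniq h hd.
- move=> j.
  pose A := fun c => exists k, (k < r.+1)%N /\ exists v, (v < (n * r).+1)%N /\
     ((v + k = j)%N /\ delta_is U M X n m (theta k) c (Rbar.Finite (INR v))).
  pose B := fun c => forall k, (k < r.+1)%N -> forall v, (v < (n * r).+1)%N ->
     ~ (~ (v + k <= j)%N /\ delta_is U M X n m (theta k) c (Rbar.Finite (INR v))).
  have hA : definable0 U M m A.
    apply: def_exists => k hk; apply: def_exists => v hv; apply: def_const.
    exact: (IHk k hk).2.2 v.
  have hB : definable0 U M m B.
    apply: def_forall => k hk; apply: def_forall => v hv; apply: def_not; apply: def_const.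
    exact: (IHk k hk).2.2 v.
  apply: def_iff (def_and hA hB) _ => c; split.
  + move=> [[k [hk [v [hv [ej hd]]]]] hb].
    case: (sv c) => [[_ hall]|[k0 [v0 [hk0 hv0 hd0 hmax hd1]]]].
      by have := di_uniq (hall k hk) hd.
    have h1 := hmax k v hk hd.
    have h2 : (v0 + k0 <= j)%N.
      case: (leqP (v0 + k0) j) => // hlt.
      case: (hb k0 hk0 v0 hv0); split => //; apply/negP; by rewrite -ltnNge.
    have -> : j = (v0 + k0)%N by apply/eqP; rewrite eqn_leq h2 -ej h1.
    exact: hd1.
  + move=> h.
    case: (sv c) => [[h' _]|[k0 [v0 [hk0 hv0 hd0 hmax hd1]]]].
      by have := di_uniq h' h.
    have ej : j = (v0 + k0)%N by have := di_uniq hd1 h => -[e]; apply: INR_eq.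
    split.
      by exists k0; split => //; exists v0; split => //; split => //; rewrite ej.
    move=> k hk v hv [hn hd]; apply: hn; rewrite ej; exact: hmax k v hk hd.
Qed.

Lemma all_P n : Pn n.
Proof. elim: n => [|n IH]; [exact: P0 | exact: step IH]. Qed.

Lemma final_res :
  (forall (n m : nat) (psi : formula L), fv_lt (n + m) psi ->
     forall c : 'I_m -> scar (ultraprod U M),
       delta_is U M X n m psi c m_infty \/
       exists k : nat, (k <= n * r)%N /\ delta_is U M X n m psi c (Rbar.Finite (INR k)))
  /\ delta_definable U M X.
Proof.
split.
  by move=> n m psi hpsi c; exact: ((all_P hpsi).1 c).
split.
- move=> n m psi hpsi r1 r2 hr.
  have [hv [hm hk]] := all_P hpsi.
  exists (fun c => delta_is U M X n m psi c m_infty \/ exists k, (k < (n * r).+1)%N /\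
     (INR k <= r1 /\ delta_is U M X n m psi c (Rbar.Finite (INR k)))).
  split; [|split].
  + apply: def_or hm _; apply: def_exists => k _; apply: def_const; exact: hk k.
  + move=> c [t [ht hle]]; case: (hv c) => [h|[k [hk' h]]]; first by left.
    have e := di_uniq ht h; subst t.
    by right; exists k; split.
  + move=> c [h|[k [_ [hle h]]]]; [exists m_infty | exists (Rbar.Finite (INR k))]; split => //=.
    lra.
- move=> n m psi hpsi.
  have [hv _] := all_P hpsi.
  exists (m_infty :: List.map (fun k => Rbar.Finite (INR k)) (List.seq 0 (n * r).+1)).
  move=> c t ht; case: (hv c) => [h|[k [hk h]]]; have e := di_uniq ht h; subst t.
    by left.
  right; apply: List.in_map; apply/List.in_seq; split; first by apply/leP.
  by apply/ltP; rewrite ltnS.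
Qed.
End Main.

Unset Implicit Arguments.
Set Strict Implicit.
Local Open Scope nat_scope.

Theorem corollary2p12 (L : language) (I : Type) (U : ultrafilter I)
  (M : I -> finStructure L)
  (M_infinite : exists a : nat -> scar (ultraprod U M),
      forall j j' : nat, @seqr L (ultraprod U M) (a j) (a j') -> j = j')
  (d : nat) (X : forall i, {set {ffun 'I_d -> fs_car (M i)}})
  (X_log_nonzero : uf U (fun i => (1 < #|X i|)%N))
  (r : nat)
  (H_values : forall (m : nat) (phi : formula L), fv_lt (1 + m) phi ->
     forall b : 'I_m -> scar (ultraprod U M),
       delta_is U M X 1 m phi b m_infty \/
       exists k : nat, (k <= r)%N /\ delta_is U M X 1 m phi b (Rbar.Finite (INR k)))
  (H_def : forall (m : nat) (phi : formula L), fv_lt (1 + m) phi ->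
     forall k : nat, (k <= r)%N ->
       definable0 U M m (fun b => delta_is U M X 1 m phi b (Rbar.Finite (INR k)))) :
  (forall (n m : nat) (psi : formula L), fv_lt (n + m) psi ->
     forall c : 'I_m -> scar (ultraprod U M),
       delta_is U M X n m psi c m_infty \/
       exists k : nat, (k <= n * r)%N /\ delta_is U M X n m psi c (Rbar.Finite (INR k)))
  /\ delta_definable U M X.
Proof.
exact: (@final_res L I U M d X X_log_nonzero r M_infinite H_values H_def).
Qed.
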